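(* (a) For $\mathbf{a}=(a_1,\dots,a_k)\in\mathbb{N}^k$, $$L^{(k+1)}(\mathbf{a})\le\min\left\{\tau_{k+1}(\mathbf{a})(\log2)^k,\ \prod_{i=1}^k(\log a_1+\cdots+\log a_i+\log2)\right\}.$$ (b) If $\mathbf{a},\mathbf{b}\in\mathbb{N}^k$ and $\gcd(a_1\cdots a_k,b_1\cdots b_k)=1$, then $L^{(k+1)}(a_1b_1,\dots,a_kb_k)\le\tau_{k+1}(\mathbf{a})L^{(k+1)}(\mathbf{b})$.
   Context: For $\mathbf{a}\in\mathbb{N}^k$, $L^{(k+1)}(\mathbf{a})$ is the $k$-dimensional Lebesgue measure of $\bigcup[\log(d_1/2),\log d_1)\times\cdots\times[\log(d_k/2),\log d_k)$, the union over all $(d_1,\dots,d_k)\in\mathbb{N}^k$ with $d_1\cdots d_i\mid a_1\cdots a_i$ for $1\le i\le k$. $\tau_{k+1}(\mathbf{a})=|\{(d_1,\dots,d_k)\in\mathbb{N}^k: d_1\cdots d_i\mid a_1\cdots a_i\ (1\le i\le k)\}|$. *)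

(* Defs.v *)
From HB Require Import structures.
From mathcomp Require Import all_boot all_order all_algebra.
From mathcomp Require Import all_classical all_reals all_analysis.
Set Implicit Arguments. Unset Strict Implicit. Unset Printing Implicit Defensive.
Import Order.TTheory GRing.Theory Num.Theory.
Local Open Scope classical_set_scope.
Local Open Scope ring_scope.

Section Defs.
Variable R : realType.

(* points of R^k are represented as x : nat -> R, coordinate i (i < k) is x i;
   coordinates >= k are irrelevant (set to 0 by the base point of the
   iterated integral). *)
Definition upd (x : nat -> R) (n : nat) (t : R) : nat -> R :=
  fun i => if i == n then t else x i.

Fixpoint iter_int (n : nat) (f : (nat -> R) -> \bar R) (x : nat -> R) : \bar R :=
  match n with
  | 0 => f x
  | m.+1 => (\int[lebesgue_measure]_(t in [set: R]) iter_int m f (upd x m t))%E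
  end.

Definition lebesgue_k (k : nat) (S : set (nat -> R)) : \bar R :=
  iter_int k (fun x => (\1_S x)%:E) (fun _ => 0).

End Defs.

Definition divcond (k : nat) (a d : 'I_k -> nat) : Prop :=
  (forall i : 'I_k, (0 < d i)%N) /\
  (forall i : 'I_k, (\prod_(j < k | j <= i) d j %| \prod_(j < k | j <= i) a j)%N).

(* tau_{k+1}(a): number of admissible d.  For a in N^k (positive entries) every
   admissible d satisfies d_i <= a_1...a_k, so the count over this finite box is
   the count over all of N^k. *)
Definition tau (k : nat) (a : 'I_k -> nat) : nat :=
  #|[set d : {ffun 'I_k -> 'I_(\prod_(j < k) a j)%N.+1} |
       `[< divcond a (fun i => nat_of_ord (d i)) >] ]|.

Definition Lset (R : realType) (k : nat) (a : 'I_k -> nat) : set (nat -> R) :=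
  [set x | exists d : 'I_k -> nat, divcond a d /\
     forall i : 'I_k, ln ((d i)%:R / 2) <= x i < ln (d i)%:R].

Definition Lk (R : realType) (k : nat) (a : 'I_k -> nat) : \bar R :=
  lebesgue_k k (@Lset R k a).
Arguments Lk R {k} a.
Arguments Lset R {k} a.

(* Main.v *)
Require Import Defs.
From HB Require Import structures.
From mathcomp Require Import all_boot all_order all_algebra.
From mathcomp Require Import all_classical all_reals all_analysis.
From mathcomp Require Import ring lra.
Import Order.TTheory GRing.Theory Num.Theory.
Local Open Scope classical_set_scope.
Local Open Scope ring_scope.
Set Implicit Arguments. Unset Strict Implicit.
Import measurable_realfun.
Section S.
Variable R : realType.
Local Notation leb := (@lebesgue_measure R).

Definition i1 (l r t : R) : R := ((l <= t) && (t < r))%:R.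
Definition len (l r : R) : R := Num.max (r - l) 0.

Lemma int_mono (f g : R -> \bar R) : (forall t, (0 <= f t)%E) -> (forall t, (f t <= g t)%E) ->
  (\int[leb]_(t in setT) f t <= \int[leb]_(t in setT) g t)%E.
Proof.
move=> f0 fg; have g0 : forall t, (0 <= g t)%E by move=> t; exact: le_trans (f0 t) (fg t).
rewrite !ge0_integralTE //; apply: le_ereal_sup => _ [h hf <-]; exists h => //= x.
exact: le_trans (hf x) (fg x).
Qed.

Lemma i1E l r t : i1 l r t = \1_(`[l, r[%classic) t.
Proof. by rewrite indicE mem_setE in_itv. Qed.

Lemma int_i1 (K l r : R) : 0 <= K ->
  (\int[leb]_(t in setT) (K * i1 l r t)%:E = (K * len l r)%:E)%E.
Proof.
move=> K0; under eq_integral do rewrite i1E EFinM.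
have m1 : measurable_fun setT (fun t => (\1_(`[l, r[%classic) t)%:E : \bar R).
  by apply/measurable_EFinP; apply: measurable_indic.
have p1 : forall t, setT t -> (0 <= (\1_(`[l, r[%classic) t)%:E :> \bar R)%E.
  by move=> t _; rewrite lee_fin.
rewrite ge0_integralZl_EFin //.
rewrite integral_indic // setIT.
have := lebesgue_measure_itv `[l, r[. rewrite /= lte_fin => ->. rewrite /len.
case: ltP => lr.
  by rewrite -EFinB -EFinM; congr (_ %:E); rewrite max_l // subr_ge0 ltW.
by rewrite max_r ?mulr0 ?mule0 // subr_le0.
Qed.

Lemma int_sum (I : Type) (s : seq I) (K l r : I -> R) : (forall j, 0 <= K j) ->
  (\int[leb]_(t in setT) (\sum_(j <- s) K j * i1 (l j) (r j) t)%:E =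
   (\sum_(j <- s) K j * len (l j) (r j))%:E)%E.
Proof.
move=> K0; under eq_integral do rewrite -sumEFin.
rewrite ge0_integral_sum //; last first.
- by move=> j t _; rewrite lee_fin mulr_ge0 // /i1 ler0n.
- move=> j; apply/measurable_EFinP; under eq_fun do rewrite i1E.
  by apply: measurable_funM => //; apply: measurable_indic.
rewrite -sumEFin; apply: eq_bigr => j _; exact: int_i1.
Qed.

Lemma iter_ge0 m (f : (nat -> R) -> \bar R) : (forall y, (0 <= f y)%E) ->
  forall x, (0 <= iter_int m f x)%E.
Proof.
move=> f0; elim: m => [|m IH] x /=; first exact: f0.
by apply: integral_ge0 => t _; exact: IH.
Qed.

Lemma iter_mono m (f g : (nat -> R) -> \bar R) : (forall y, (0 <= f y)%E) ->
  (forall y, (f y <= g y)%E) -> forall x, (iter_int m f x <= iter_int m g x)%E.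
Proof.
move=> f0 fg; elim: m => [|m IH] x /=; first exact: fg.
by apply: int_mono => t; [exact: iter_ge0 | exact: IH].
Qed.

Definition Box := nat -> R * R.
Definition indf (m n : nat) (B : Box) (x : nat -> R) : R :=
  \prod_(i < n | (m <= i)%N) i1 (B i).1 (B i).2 (x i).
Definition vol (m : nat) (B : Box) : R := \prod_(i < m) len (B i).1 (B i).2.

Lemma i1_ge0 l r t : 0 <= i1 l r t.
Proof. by rewrite /i1 ler0n. Qed.
Lemma len_ge0 l r : 0 <= len l r.
Proof. by rewrite /len le_max lexx orbT. Qed.
Lemma indf_ge0 m n B x : 0 <= indf m n B x.
Proof. by apply: prodr_ge0 => i _; exact: i1_ge0. Qed.
Lemma vol_ge0 m B : 0 <= vol m B.
Proof. by apply: prodr_ge0 => i _; exact: len_ge0. Qed.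

Lemma indf_upd m n B x t : (m < n)%N ->
  indf m n B (upd x m t) = i1 (B m).1 (B m).2 t * indf m.+1 n B x.
Proof.
move=> mn; rewrite /indf (bigD1 (Ordinal mn)) //= /upd eqxx; congr (_ * _).
apply: eq_big => [i|i /andP[_ H]].
  by rewrite ltn_neqAle andbC eq_sym; congr (_ && _).
by have -> : (nat_of_ord i == m) = false by apply/negbTE.
Qed.

Lemma EX (I : Type) (s : seq I) (c : I -> R) (B : I -> Box) n :
  (forall j, 0 <= c j) -> forall m, (m <= n)%N -> forall x,
  iter_int m (fun y => (\sum_(j <- s) c j * indf 0 n (B j) y)%:E) x =
  (\sum_(j <- s) c j * vol m (B j) * indf m n (B j) x)%:E.
Proof.
move=> c0; elim=> [|m IH] mn x /=.
  by congr (_%:E); apply: eq_bigr => j _; rewrite /vol big_ord0 mulr1.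
transitivity (\int[leb]_(t in setT) (\sum_(j <- s)
   (c j * vol m (B j) * indf m.+1 n (B j) x) * i1 (B j m).1 (B j m).2 t)%:E)%E.
  apply: eq_integral => t _; rewrite IH ?(ltnW mn) //; congr (_%:E).
  apply: eq_bigr => j _; rewrite indf_upd //.
  by rewrite -!mulrA; congr (_ * (_ * _)); rewrite mulrC.
rewrite int_sum; last first.
  by move=> j; rewrite !mulr_ge0 // ?vol_ge0 ?indf_ge0.
congr (_%:E); apply: eq_bigr => j _.
by rewrite /vol big_ord_recr /= -!mulrA [len _ _ * _]mulrC.
Qed.

Definition inb n (B : Box) (x : nat -> R) : bool :=
  [forall i : 'I_n, ((B i).1 <= x i) && (x i < (B i).2)].

Lemma indf0E n B x : indf 0 n B x = \prod_(i < n) i1 (B i).1 (B i).2 (x i).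
Proof. by apply: eq_bigl. Qed.

Lemma indfE n B x : indf 0 n B x = (inb n B x)%:R.
Proof.
rewrite indf0E /inb; case: (boolP [forall _, _]) => [/forallP H|/forallPn [i Hi]].
  by apply: big1 => i _; rewrite /i1 H.
by rewrite (bigD1 i) //= /i1 (negbTE Hi) mul0r.
Qed.

Lemma indf_S n B x :
  indf 0 n.+1 B x = indf 0 n B x * i1 (B n).1 (B n).2 (x n).
Proof. by rewrite !indf0E big_ord_recr. Qed.

Definition setb (q : Box) n (I : R * R) : Box := fun i => if i == n then I else q i.
Definition meet (b c : Box) : Box :=
  fun i => (Num.max (b i).1 (c i).1, Num.min (b i).2 (c i).2).

Lemma indf_setb q n I x : indf 0 n (setb q n I) x = indf 0 n q x.
Proof.
rewrite !indf0E; apply: eq_bigr => i _; rewrite /setb.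
by have -> : (nat_of_ord i == n) = false by rewrite ltn_eqF.
Qed.

Lemma indf_setbS q n I x : indf 0 n.+1 (setb q n I) x = indf 0 n q x * i1 I.1 I.2 (x n).
Proof. by rewrite indf_S indf_setb /setb eqxx. Qed.

Lemma natr_and (a b : bool) : (a && b)%:R = a%:R * b%:R :> R.
Proof. by case: a; case: b; rewrite /= ?mul0r ?mul1r. Qed.

Lemma indf_meet n b c x : indf 0 n (meet b c) x = indf 0 n b x * indf 0 n c x.
Proof.
rewrite !indf0E -big_split /=; apply: eq_bigr => i _.
rewrite /i1 /meet /= ge_max lt_min -natr_and; congr (_%:R).
by case: (_ <= _); case: (_ <= _); case: (_ < _); case: (_ < _).
Qed.

Lemma i1_diff l1 r1 l2 r2 t : i1 l1 r1 t * (1 - i1 l2 r2 t) =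
  i1 l1 (Num.min r1 l2) t + i1 (Num.max l1 (Num.max r2 l2)) r1 t.
Proof.
rewrite /i1 lt_min !ge_max; case: (leP l2 t) => h2; case: (leP r2 t) => h3;
 case: (l1 <= t); case: (t < r1) => /=;
 rewrite ?(mul1r, mul0r, mulr1, mulr0, subrr, subr0, addr0, add0r) //.
Qed.

Definition Decomp n (S : (nat -> R) -> bool) :=
  exists Q : seq Box, forall x, (S x)%:R = \sum_(q <- Q) indf 0 n q x.

Lemma natr_andN (a c : bool) : (a && ~~ c)%:R = a%:R * (1 - c%:R) :> R.
Proof. by case: a; case: c; rewrite /= ?mul0r ?mul1r ?subrr ?subr0. Qed.

Lemma DIFF b c n : Decomp n (fun x => inb n b x && ~~ inb n c x).
Proof.
elim: n => [|n [Q HQ]].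
  exists [::] => x; rewrite big_nil.
  have -> : inb 0 c x by apply/forallP; case.
  by rewrite andbF.

exists (map (fun q => setb q n (b n)) Q ++
  [:: setb (meet b c) n ((b n).1, Num.min (b n).2 (c n).1);
      setb (meet b c) n (Num.max (b n).1 (Num.max (c n).2 (c n).1), (b n).2)]) => x.
rewrite big_cat big_map /= !big_cons big_nil addr0 !indf_setbS /=.
rewrite natr_andN -!indfE !indf_S.
have -> : indf 0 n b x * i1 (b n).1 (b n).2 (x n) *
  (1 - indf 0 n c x * i1 (c n).1 (c n).2 (x n)) =
  (indf 0 n b x * (1 - indf 0 n c x)) * i1 (b n).1 (b n).2 (x n) +
  (indf 0 n b x * indf 0 n c x) * (i1 (b n).1 (b n).2 (x n) * (1 - i1 (c n).1 (c n).2 (x n))).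
  by ring.
rewrite i1_diff -indf_meet; congr (_ + _); last by rewrite mulrDr.
rewrite (indfE n b) (indfE n c) -natr_andN HQ big_distrl /=; apply: eq_bigr => q _.
by rewrite indf_setbS.
Qed.

Lemma DIFFL n c (Q : seq Box) : exists Q' : seq Box, forall x,
  \sum_(q <- Q) (inb n q x && ~~ inb n c x)%:R = \sum_(q <- Q') indf 0 n q x.
Proof.
elim: Q => [|q Q [Q2 H2]]; first by exists [::] => x; rewrite !big_nil.
have [Q1 H1] := DIFF q c n.
by exists (Q1 ++ Q2) => x; rewrite big_cons big_cat H1 H2.
Qed.

Lemma DIFFS n (L : seq Box) : forall S, Decomp n S ->
  Decomp n (fun x => S x && ~~ has (fun c => inb n c x) L).
Proof.
elim: L => [|c L IH] S [Q HQ].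
  by exists Q => x; rewrite /= andbT.
have [Q' HQ'] := DIFFL n c Q.
have D1 : Decomp n (fun x => S x && ~~ inb n c x).
  exists Q' => x; rewrite -HQ' natr_andN HQ big_distrl /=.
  by apply: eq_bigr => q _; rewrite natr_andN indfE.
have [Q2 H2] := IH _ D1; exists Q2 => x; rewrite -H2 /= negb_or andbA //.
Qed.

Lemma DEC n (L : seq Box) : Decomp n (fun x => has (fun B => inb n B x) L).
Proof.
elim: L => [|b L [Q1 H1]]; first by exists [::] => x; rewrite big_nil.
have D0 : Decomp n (fun x => inb n b x) by exists [:: b] => x; rewrite big_seq1 indfE.
have [Q2 H2] := @DIFFS n L _ D0.
exists (Q1 ++ Q2) => x; rewrite big_cat -H1 -H2 /=.
by case: (inb n b x); case: (has _ _); rewrite /= ?addr0 ?add0r.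
Qed.
End S.

Set Strict Implicit.
Section Main.
Variable R : realType.
Variable k : nat.

Definition ext (d : 'I_k -> nat) (i : nat) : nat := odflt 1%N (omap d (insub i)).
Lemma ext_ord d (o : 'I_k) : ext d o = d o.
Proof. by rewrite /ext valK. Qed.

Definition Bx (d : 'I_k -> nat) : Box R :=
  fun i => (ln ((ext d i)%:R / 2), ln (ext d i)%:R).

Lemma Lset_inb (a : 'I_k -> nat) x :
  Lset R a x <-> exists d, divcond a d /\ inb k (Bx d) x.
Proof.
split=> -[d [H1 H2]]; exists d; split => //.
  by apply/forallP => i; rewrite /Bx /= ext_ord; exact: H2.
by move=> i; move/forallP: H2 => /(_ i); rewrite /Bx /= ext_ord.
Qed.

Definition Pp (g : 'I_k -> nat) (i : 'I_k) := (\prod_(j < k | (j <= i)%N) g j)%N.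

Lemma dvd_term g i : (g i %| Pp g i)%N.
Proof. by rewrite /Pp (bigD1 i) //= dvdn_mulr. Qed.

Lemma dvd_full g i : (Pp g i %| \prod_(j < k) g j)%N.
Proof. by rewrite (bigID (fun j : 'I_k => (j <= i)%N)) /= dvdn_mulr. Qed.

Lemma Pp_gt0 g i : (forall j, 0 < g j)%N -> (0 < Pp g i)%N.
Proof. by move=> g0; rewrite prodn_gt0. Qed.

Lemma d_le_Pa a d i : (forall j, 0 < a j)%N -> divcond a d -> (d i <= Pp a i)%N.
Proof.
move=> a0 [d0 dd]; apply: (@leq_trans (Pp d i)).
  by apply: dvdn_leq; [exact: Pp_gt0 | exact: dvd_term].
by apply: dvdn_leq; [exact: Pp_gt0 | exact: dd].
Qed.

Lemma Pa_le a i : (forall j, 0 < a j)%N -> (Pp a i <= \prod_(j < k) a j)%N.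
Proof. by move=> a0; apply: dvdn_leq; [rewrite prodn_gt0 | exact: dvd_full]. Qed.

Definition FT (a : 'I_k -> nat) := {ffun 'I_k -> 'I_(\prod_(j < k) a j).+1}.

Lemma Lset_FT a x : (forall j, 0 < a j)%N ->
  Lset R a x <-> exists dd : FT a, divcond a (fun i => nat_of_ord (dd i)) /\
     inb k (Bx (fun i => nat_of_ord (dd i))) x.
Proof.
move=> a0; rewrite Lset_inb; split=> -[d [H1 H2]]; last by exists (fun i => nat_of_ord (d i)).
exists [ffun i => inord (d i)].
have -> : (fun i => nat_of_ord (([ffun i => inord (d i)] : FT a) i)) = d.
  apply: funext => i; rewrite ffunE inordK // ltnS.
  have h1 := d_le_Pa i a0 H1; have h2 := @Pa_le a i a0; exact: leq_trans h1 h2.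
by [].
Qed.


Lemma ln_half (n : nat) : (0 < n)%N -> ln ((n%:R : R) / 2) = ln n%:R - ln 2.
Proof.
move=> n0; rewrite lnM ?posrE ?ltr0n ?invr_gt0 ?ltr0n // lnV ?posrE ?ltr0n //.
Qed.

Lemma ln_nat_ge0 (n : nat) : (0 < n)%N -> 0 <= ln (n%:R : R).
Proof. by move=> n0; apply: ln_ge0; rewrite ler1n. Qed.

Lemma ln2_ge0 : 0 <= ln (2 : R).
Proof. by apply: ln_ge0; rewrite ler1n. Qed.

Lemma len_ln (n : nat) : (0 < n)%N -> len (ln ((n%:R : R) / 2)) (ln n%:R) = ln 2.
Proof.
move=> n0; rewrite /len ln_half // opprB addrCA subrr addr0 max_l //; exact: ln2_ge0.
Qed.

Lemma vol_Bx d : (forall i, 0 < d i)%N -> vol k (Bx d) = ln 2 ^+ k.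
Proof.
move=> d0; rewrite /vol.
under eq_bigr => i _ do rewrite /Bx /= ext_ord len_ln //.
by rewrite prodr_const card_ord.
Qed.

Lemma indf_kk n (B : Box R) x : indf n n B x = 1.
Proof. by apply: big1 => i Hi; move: (ltn_ord i); rewrite ltnNge Hi. Qed.

Lemma ln_prod (P : pred 'I_k) (f : 'I_k -> R) : (forall j, 0 < f j) ->
  ln (\prod_(j | P j) f j) = \sum_(j | P j) ln (f j).
Proof.
move=> f0.
have : (0 < \prod_(j | P j) f j) /\ ln (\prod_(j | P j) f j) = \sum_(j | P j) ln (f j).
  elim/big_rec2: _ => [|j s p Pj [p0 <-]]; first by rewrite ln1 ltr01.
  by split; [rewrite mulr_gt0 | rewrite lnM ?posrE].
by case.
Qed.


Lemma partA1 (a : 'I_k -> nat) : (forall i, (0 < a i)%N) ->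
  (Lk R a <= (\prod_(i < k) (\sum_(j < k | (j <= i)%N) ln ((a j)%:R : R) + ln 2))%:E)%E.
Proof.
move=> a0.
pose S (i : nat) := \sum_(j < k | (j <= i)%N) ln ((a j)%:R : R).
pose B0 : Box R := fun i => (- ln 2, S i).
have H := @EX R unit [:: tt] (fun _ => 1) (fun _ => B0) k (fun _ => ler01) k (leqnn k) (fun _ => 0).
rewrite /Lk /lebesgue_k.
apply: (@le_trans _ _ (iter_int k (fun y => (\sum_(j <- [:: tt]) 1 * indf 0 k B0 y)%:E) (fun _ => 0))).
  apply: iter_mono => y; first by rewrite lee_fin indicE ler0n.
  rewrite lee_fin big_seq1 mul1r indicE.
  case: (boolP (y \in Lset R a)) => [/set_mem /Lset_inb [d [[d0 dc] /forallP Hd]] | _];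
    last by rewrite indf_ge0.
  rewrite indfE; have -> // : inb k B0 y.
  apply/forallP => i; have /andP[h1 h2] := Hd i; rewrite /Bx /= ext_ord in h1 h2.
  rewrite /B0 /=; apply/andP; split.
    by move: h1; rewrite ln_half // => h1; have := @ln_nat_ge0 (d i) (d0 i); lra.
  apply: lt_le_trans h2 _.
  have -> : S i = ln (Pp a i)%:R.
    by rewrite /Pp natr_prod ln_prod // => j; rewrite ltr0n.
  rewrite ler_ln ?posrE ?ltr0n ?Pp_gt0 // ler_nat; exact: d_le_Pa.
rewrite H big_seq1 mul1r indf_kk mulr1 lee_fin le_eqVlt; apply/orP; left; apply/eqP.
apply: eq_bigr => i _; rewrite /B0 /len /= opprK max_l //.
apply: addr_ge0; last exact: ln2_ge0.
by apply: sumr_ge0 => j _; apply: ln_nat_ge0.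
Qed.


Lemma sum_mem_card (T : finType) (A : set T) :
  \sum_(d : T) ((d \in A)%:R : R) = (#|A|)%:R.
Proof.
rewrite -sum1_card natr_sum [RHS]big_mkcond /=; apply: eq_bigr => d _.
by case: (d \in A).
Qed.

Lemma partA2 (a : 'I_k -> nat) : (forall i, (0 < a i)%N) ->
  (Lk R a <= ((tau a)%:R * ln (2 : R) ^+ k)%:E)%E.
Proof.
move=> a0.
pose T := [set d : FT a | `[< divcond a (fun i => nat_of_ord (d i)) >] ].
pose c := fun d : FT a => ((d \in T)%:R : R).
pose B := fun d : FT a => Bx (fun i => nat_of_ord (d i)).
have c0 : forall d, 0 <= c d by move=> d; rewrite /c ler0n.
have H := @EX R (FT a) (index_enum (FT a)) c B k c0 k (leqnn k) (fun _ => 0).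
rewrite /Lk /lebesgue_k.
apply: (@le_trans _ _ (iter_int k (fun y => (\sum_(j <- index_enum (FT a)) c j * indf 0 k (B j) y)%:E) (fun _ => 0))).
  apply: iter_mono => y; first by rewrite lee_fin indicE ler0n.
  have s0 : 0 <= \sum_(j <- index_enum (FT a)) c j * indf 0 k (B j) y.
    by apply: sumr_ge0 => j _; rewrite mulr_ge0 ?indf_ge0.
  rewrite lee_fin indicE.
  case: (boolP (y \in Lset R a)) => [/set_mem /(@Lset_FT a y a0) [dd [dc Hd]] | _]; last by [].
  rewrite (bigD1 dd) //= /c /B indfE Hd.
  have -> : dd \in T by rewrite inE; apply/asboolP.
  by rewrite mulr1 lerDl; apply: sumr_ge0 => j _; rewrite mulr_ge0 ?indf_ge0.
rewrite H lee_fin le_eqVlt; apply/orP; left; apply/eqP.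
rewrite /tau -/T -sum_mem_card big_distrl /=; apply: eq_bigr => d _.
rewrite indf_kk mulr1 /c; case: (boolP (d \in T)) => dT; last by rewrite !mul0r.
rewrite !mul1r vol_Bx //; move: dT; by rewrite inE => /asboolP [].
Qed.


Lemma part_prod (pi : nat_pred) (P : pred 'I_k) (g : 'I_k -> nat) : (forall j, 0 < g j)%N ->
  (partn (\prod_(j | P j) g j)%N pi = (\prod_(j | P j) partn (g j) pi)%N)%N.
Proof.
move=> g0.
have : (0 < \prod_(j | P j) g j)%N /\ partn (\prod_(j | P j) g j)%N pi = (\prod_(j | P j) partn (g j) pi)%N.
  elim/big_rec2: _ => [|j x y Pj [y0 <-]]; first by rewrite partn1.
  by split; [rewrite muln_gt0 g0 | rewrite partnM].
by case.
Qed.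

Lemma NT (a b d : 'I_k -> nat) : (forall i, 0 < a i)%N -> (forall i, 0 < b i)%N ->
  coprime (\prod_(i < k) a i) (\prod_(i < k) b i) ->
  divcond (fun i => a i * b i)%N d ->
  exists e f, [/\ divcond a e, divcond b f & forall i, d i = (e i * f i)%N].
Proof.
move=> a0 b0 cop [d0 dd].
set pi := \pi(\prod_(i < k) a i)%N.
have A0 : (0 < \prod_(i < k) a i)%N by rewrite prodn_gt0.
have B0 : (0 < \prod_(i < k) b i)%N by rewrite prodn_gt0.
have pA : forall i, pi.-nat (Pp a i).
  by move=> i; apply: pnat_dvd (dvd_full a i) (pnat_pi A0).
have pB : forall i, (negn pi).-nat (Pp b i).
  by move=> i; apply: pnat_dvd (dvd_full b i) _; rewrite -coprime_pi'.
have dAB : forall i, (Pp d i %| Pp a i * Pp b i)%N.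
  by move=> i; move: (dd i); rewrite big_split.
have ABp : forall i, (0 < Pp a i * Pp b i)%N.
  by move=> i; rewrite muln_gt0 !Pp_gt0.
exists (fun i => partn (d i) pi), (fun i => partn (d i) (negn pi)); split.
- split => [i|i]; first exact: part_gt0.
  rewrite -part_prod //.
  have := partn_dvd pi (ABp i) (dAB i).
  by rewrite partnM ?Pp_gt0 // (part_pnat_id (pA i)) (part_p'nat (pB i)) muln1.
- split => [i|i]; first exact: part_gt0.
  rewrite -part_prod //.
  have := partn_dvd (negn pi) (ABp i) (dAB i).
  have h : (negn (negn pi)).-nat (Pp a i) by rewrite pnatNK.
  by rewrite partnM ?Pp_gt0 // (part_pnat_id (pB i)) (part_p'nat h) mul1n.
- by move=> i; rewrite partnC.
Qed.


Lemma to_FT (a d : 'I_k -> nat) : (forall i, 0 < a i)%N -> divcond a d ->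
  exists dd : FT a, forall i, nat_of_ord (dd i) = d i.
Proof.
move=> a0 dc; exists [ffun i => inord (d i)] => i; rewrite ffunE inordK // ltnS.
have h1 := d_le_Pa i a0 dc; have h2 := @Pa_le a i a0; exact: leq_trans h1 h2.
Qed.

Definition shift (q : Box R) (s : nat -> R) : Box R :=
  fun i => ((q i).1 + s i, (q i).2 + s i).

Lemma indf_shift (q : Box R) s y n :
  indf 0 n (shift q s) y = indf 0 n q (fun i => y i - s i).
Proof. by apply: eq_bigr => i _; rewrite /i1 /shift /= lerBrDr ltrBlDr. Qed.

Lemma vol_shift (q : Box R) s n : vol n (shift q s) = vol n q.
Proof.
apply: eq_bigr => i _; rewrite /len /shift /=; congr (Num.max _ _); ring.
Qed.

Lemma partB (a b : 'I_k -> nat) : (forall i, (0 < a i)%N) -> (forall i, (0 < b i)%N) ->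
  coprime (\prod_(i < k) a i) (\prod_(i < k) b i) ->
  (Lk R (fun i => a i * b i)%N <= ((tau a)%:R : R)%:E * Lk R b)%E.
Proof.
move=> a0 b0 cop.
pose Pb := fun f : FT b => `[< divcond b (fun i => nat_of_ord (f i)) >].
pose L := [seq Bx (fun i => nat_of_ord (f i)) | f : FT b <- [seq f <- index_enum (FT b) | Pb f]].
have [Q HQ] := DEC k L.
have memLb : forall y, (y \in Lset R b) = has (fun B => inb k B y) L.
  move=> y; rewrite has_map; apply/idP/idP.
  - move=> /set_mem /(@Lset_FT b y b0) [ff [fc fi]]; apply/hasP; exists ff => //.
    by rewrite mem_filter mem_index_enum andbT; apply/asboolP.
  - move=> /hasP [ff]; rewrite mem_filter => /andP [/asboolP fc _] fi.
    by apply/mem_set/(@Lset_FT b y b0); exists ff.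
have LbE : Lk R b = (\sum_(q <- Q) vol k q)%:E.
  rewrite /Lk /lebesgue_k.
  have -> : (fun x => (\1_(Lset R b) x)%:E) =
     (fun y => (\sum_(q <- Q) 1 * indf 0 k ((fun q => q) q) y)%:E).
    apply: funext => y; rewrite indicE memLb HQ; congr (_%:E).
    by apply: eq_bigr => q _; rewrite mul1r.
  rewrite (@EX R (Box R) Q (fun _ => 1) (fun q => q) k (fun _ => ler01) k (leqnn k)).
  by congr (_%:E); apply: eq_bigr => q _; rewrite mul1r indf_kk mulr1.
pose Ta := [set d : FT a | `[< divcond a (fun i => nat_of_ord (d i)) >] ].
pose n := size Q.
pose q0 : Box R := fun _ => (0, 0).
pose sh := fun (e : FT a) (i : nat) => ln ((ext (fun j => nat_of_ord (e j)) i)%:R : R).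
pose c := fun p : FT a * 'I_n => ((p.1 \in Ta)%:R : R).
pose B := fun p : FT a * 'I_n => shift (nth q0 Q p.2) (sh p.1).
have c0 : forall p, 0 <= c p by move=> p; rewrite /c ler0n.
have H := @EX R (FT a * 'I_n)%type (index_enum _) c B k c0 k (leqnn k) (fun _ => 0).
have dbl : forall F : FT a -> 'I_n -> R,
    \sum_(p : FT a * 'I_n) F p.1 p.2 = \sum_(e : FT a) \sum_(j : 'I_n) F e j.
  by move=> F; rewrite pair_big.
rewrite LbE /Lk /lebesgue_k.
apply: (@le_trans _ _ (iter_int k (fun y => (\sum_(p <- index_enum (FT a * 'I_n)%type) c p * indf 0 k (B p) y)%:E) (fun _ => 0))).
  apply: iter_mono => y; first by rewrite lee_fin indicE ler0n.
  rewrite lee_fin indicE.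
  case: (boolP (y \in Lset R (fun i => a i * b i)%N)) => [/set_mem /Lset_inb [d [dc /forallP Hd]] | _];
    last by apply: sumr_ge0 => p _; rewrite mulr_ge0 ?indf_ge0.
  have [e [f [ec fc def]]] := @NT a b d a0 b0 cop dc.
  have [ee eeE] := @to_FT a e a0 ec.
  have ee_in : ee \in Ta.
    rewrite inE; apply/asboolP.
    by have -> : (fun i => nat_of_ord (ee i)) = e by apply: funext.
  pose y' := fun i => y i - sh ee i.
  have y'L : y' \in Lset R b.
    apply/mem_set/Lset_inb; exists f; split => //; apply/forallP => i.
    have := Hd i; rewrite /Bx /= !ext_ord def /y' /sh ext_ord eeE.
    have e0 := ec.1 i; have f0 := fc.1 i.
    rewrite ln_half ?muln_gt0 ?e0 // natrM lnM ?posrE ?ltr0n // ln_half //.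
    by move=> /andP[h1 h2]; apply/andP; split; lra.
  have one : 1 = \sum_(q <- Q) indf 0 k q y' by rewrite -HQ -memLb y'L.
  rewrite (dbl (fun e j => c (e, j) * indf 0 k (B (e, j)) y)) (bigD1 ee) //=.
  have -> : \sum_(j < n) c (ee, j) * indf 0 k (B (ee, j)) y = 1.
    rewrite one (big_nth q0) big_mkord; apply: eq_bigr => j _.
    by rewrite /c /= ee_in mul1r /B indf_shift.
  rewrite lerDl; apply: sumr_ge0 => e1 _; apply: sumr_ge0 => j _.
  by rewrite mulr_ge0 ?indf_ge0.
rewrite H -EFinM lee_fin le_eqVlt; apply/orP; left; apply/eqP.
rewrite /tau -/Ta -sum_mem_card big_distrl /=.
rewrite (dbl (fun e j => c (e, j) * vol k (B (e, j)) * indf k k (B (e, j)) (fun _ => 0))).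
apply: eq_bigr => e _; rewrite (big_nth q0) big_mkord big_distrr /=; apply: eq_bigr => j _.
by rewrite /c /B /= vol_shift indf_kk mulr1.
Qed.

End Main.

Unset Implicit Arguments.
Theorem lemma2p1 (R : realType) (k : nat) :
  (forall a : 'I_k -> nat, (forall i, (0 < a i)%N) ->
     (Lk R a <= (Num.min ((tau a)%:R * ln (2 : R) ^+ k)
          (\prod_(i < k) (\sum_(j < k | (j <= i)%N) ln ((a j)%:R : R) + ln 2)))%:E)%E)
  /\
  (forall a b : 'I_k -> nat, (forall i, (0 < a i)%N) -> (forall i, (0 < b i)%N) ->
     coprime (\prod_(i < k) a i) (\prod_(i < k) b i) ->
     (Lk R (fun i => a i * b i)%N <= ((tau a)%:R : R)%:E * Lk R b)%E).
Proof.
split; last exact: partB.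
move=> a a0; rewrite EFin_min le_min; apply/andP; split.
  exact: partA2.
exact: partA1.
Qed.
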